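(* Let $H = \{h_0 = 0_H, h_1, \dots, h_{t-1}\}$ be a finite abelian group with a fixed enumeration of its elements, and let $\boldsymbol{\lambda} = (\lambda_0,\dots,\lambda_{t-1})$ be a sequence of nonnegative integers. Suppose that for infinitely many primes $p$, every non-zero sum subset of type $\boldsymbol{\lambda}$ of $(\mathbb{Z}_p \times H) \setminus \{0_{\mathbb{Z}_p\times H}\}$ is sequenceable. Then there exists a positive integer $N(\boldsymbol{\lambda})$ such that for every abelian group $G$ with $\vartheta(G) > N(\boldsymbol{\lambda})$, every non-zero sum subset of type $\boldsymbol{\lambda}$ of $(G \times H) \setminus \{0_{G\times H}\}$ is sequenceable.
   Context: For an abelian group $G$, $\vartheta(G) = \min_{0_G \neq g \in G} o(g)$, where $o(g)$ is the order (cardinality of the cyclic subgroup generated by $g$, possibly infinite). For a finite subset $S$ of an abelian group with $|S| = k$, an ordering $(x_1,\dots,x_k)$ of $S$ has partial sums $(y_0,\dots,y_k)$ with $y_0 = 0$, $y_i = x_1+\cdots+x_i$. It is a sequencing if the $y_i$ are pairwise distinct, and a rotational sequencing if they are pairwise distinct except that $y_k = y_0 = 0$; $S$ is sequenceable if it has one or the other. $S$ is non-zero sum if the sum of its elements is nonzero. The type of a finite subset $S \subseteq G \times H$ is $(\lambda_0,\dots,\lambda_{t-1})$ where $\lambda_i$ is the number of elements of $S$ whose $H$-coordinate equals $h_i$. *)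

(* Defs.v *)
From HB Require Import structures.
From mathcomp Require Import all_boot all_order all_algebra.
Set Implicit Arguments. Unset Strict Implicit. Unset Printing Implicit Defensive.
Import GRing.Theory.
Local Open Scope ring_scope.

Definition has_order {V : zmodType} (g : V) (n : nat) : Prop :=
  (0 < n)%N /\ g *+ n = 0 /\ (forall k : nat, (0 < k < n)%N -> g *+ k != 0).
Definition infinite_order {V : zmodType} (g : V) : Prop :=
  forall k : nat, (0 < k)%N -> g *+ k != 0.

(* theta(V) > N, i.e. min_{g <> 0} o(g) > N: every non-zero element has
   order (possibly infinite) strictly larger than N. *)
Definition theta_gt (V : zmodType) (N : nat) : Prop :=
  forall g : V, g != 0 -> infinite_order g \/ exists n, has_order g n /\ (N < n)%N.

Definition psums {V : zmodType} (xs : seq V) : seq V :=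
  mkseq (fun i => \sum_(x <- take i xs) x) (size xs).+1.

Definition is_sequencing {V : zmodType} (xs : seq V) : bool := uniq (psums xs).
Definition is_rotational_sequencing {V : zmodType} (xs : seq V) : bool :=
  (\sum_(x <- xs) x == 0) && uniq (take (size xs) (psums xs)).

(* a finite set S (given as a duplicate-free list s) is sequenceable if some
   ordering of its elements is a sequencing or a rotational sequencing *)
Definition sequenceable {V : zmodType} (s : seq V) : Prop :=
  exists xs : seq V, perm_eq xs s /\
    (is_sequencing xs \/ is_rotational_sequencing xs).

Definition all_nzs_type_sequenceable (G : zmodType) (H : finZmodType) (t : nat)
    (h : 'I_t -> H) (lam : 'I_t -> nat) : Prop :=
  forall s : seq (G * H)%type,
    uniq s -> (0 : G * H) \notin s ->
    (\sum_(x <- s) x != 0) ->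
    (forall i : 'I_t, count (fun x : G * H => x.2 == h i) s = lam i) ->
    sequenceable s.

(* Main.v *)
From mathcomp Require Import all_boot all_order all_algebra.
From mathcomp Require Import zify ring lra.
Require Import Defs.
Set Implicit Arguments. Unset Strict Implicit. Unset Printing Implicit Defensive.
Import Order.TTheory GRing.Theory Num.Theory.
Local Open Scope ring_scope.

Lemma L1 (F : fieldType) n k (A : 'M[F]_(n, k)) (c : 'rV[F]_k) :
  ~~ (c <= A)%MS -> exists x : 'cV[F]_k, A *m x = 0 /\ c *m x != 0.
Proof.
move=> ncA.
set K := kermx A^T.
have KA : K *m A^T = 0 by apply/eqP; rewrite -sub_kermx.
have : K *m c^T != 0.
  apply: contra ncA => /eqP Kc.
  have KB : (K <= kermx (col_mx A c)^T)%MS.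
    by rewrite sub_kermx tr_col_mx mul_mx_row KA Kc row_mx0.
  have rk := mxrankS KB.
  rewrite !mxrank_ker !mxrank_tr in rk.
  have sAB : (A <= col_mx A c)%MS by rewrite -addsmxE addsmxSl.
  have [le _] := mxrank_leqif_sup sAB.
  have rA : (\rank A <= k)%N by rewrite rank_leq_col.
  have rB : (\rank (col_mx A c) <= k)%N by rewrite rank_leq_col.
  have eqr : \rank (col_mx A c) = \rank A by apply/eqP; rewrite eqn_leq le andbT; lia.
  have [_] := mxrank_leqif_sup sAB; rewrite eqr eqxx => /esym BA.
  apply: submx_trans BA; by rewrite -addsmxE addsmxSr.
move=> Kc.
have [i Hi] : exists i, row i K *m c^T != 0.
  apply/existsP; apply: contraR Kc; rewrite negb_exists => /forallP H.
  apply/eqP/row_matrixP => i; rewrite row_mul row0; exact/eqP/negPn/H.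
exists (row i K)^T; split.
  by rewrite -[A]trmxK -trmx_mul -row_mul KA row0 trmx0.
by rewrite -[c]trmxK -trmx_mul trmx_eq0.
Qed.

Lemma mx11_neq0 (F : fieldType) (M : 'M[F]_1) : M != 0 -> M 0 0 != 0.
Proof.
apply: contra => /eqP H. by rewrite [M]mx11_scalar H raddf0.
Qed.

Lemma sum_ge_mem (F : realDomainType) (T : eqType) (l : seq T) (f : T -> F) a :
  (forall x, 0 <= f x) -> a \in l -> f a <= \sum_(x <- l) f x.
Proof.
move=> f0; elim: l => //= b l IH; rewrite in_cons big_cons => /orP[/eqP->|/IH H].
  by rewrite lerDl; apply: sumr_ge0 => i _.
by apply: le_trans H _; rewrite lerDr.
Qed.

Lemma L3 (F : realFieldType) n k (A : 'M[F]_(n, k)) (l : seq 'rV[F]_k) :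
  (forall c, c \in l -> ~~ (c <= A)%MS) ->
  exists x : 'cV[F]_k, A *m x = 0 /\ forall c, c \in l -> (c *m x) 0 0 != 0.
Proof.
elim: l => [|c l IH] H.
  by exists 0; rewrite mulmx0.
have [x [Ax Hx]] := IH (fun c' Hc' => H c' (mem_behead (s:=c::l) Hc')).
have [y [Ay Hy]] := L1 (H c (mem_head _ _)).
have Hy' := mx11_neq0 Hy.
pose a (c' : 'rV[F]_k) := (c' *m x) 0 0. pose b (c' : 'rV[F]_k) := (c' *m y) 0 0.
pose lam := 1 + \sum_(c' <- c :: l) `|a c'| / `|b c'|.
exists (x + lam *: y); split.
  by rewrite mulmxDr -scalemxAr Ax Ay scaler0 addr0.
move=> c' Hc'.
rewrite mulmxDr -scalemxAr.
have E0 : forall X Y : 'M[F]_1, (X + lam *: Y) 0 0 = X 0 0 + lam * Y 0 0.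
  by move=> X Y; rewrite !mxE.
rewrite E0.
have le1 : `|a c'| / `|b c'| <= lam - 1.
  rewrite /lam addrC addKr.
  apply: (@sum_ge_mem _ _ (c :: l) (fun z => `|a z| / `|b z|) c' _ Hc') => z.
  by rewrite divr_ge0.
rewrite /a /b in le1 *.
have [b0|bn0] := eqVneq ((c' *m y) 0 0) 0.
  rewrite b0 mulr0 addr0.
  have : c' != c by apply: contraNneq Hy' => <-; apply/eqP.
  by move: Hc'; rewrite in_cons => /orP[/eqP->|/Hx]; rewrite ?eqxx.
apply/eqP => E.
have : `|(c' *m x) 0 0| = lam * `|(c' *m y) 0 0|.
  have lam0 : 0 <= lam.
    by rewrite /lam addr_ge0 //; apply: sumr_ge0 => z _; rewrite divr_ge0.
  rewrite -[lam in RHS]ger0_norm // -normrM -normrN; congr `|_|.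
  by apply/eqP; rewrite eq_sym -addr_eq0 addrC E.
have bp : 0 < `|(c' *m y) 0 0| by rewrite normr_gt0.
move: le1; rewrite ler_pdivrMr // => le1 E2.
move: le1; rewrite E2 mulrBl mul1r.
by rewrite -subr_ge0 addrC addKr oppr_ge0 leNgt bp.
Qed.

Lemma clear_den (l : seq rat) :
  exists d : nat, (0 < d)%N /\ forall q, q \in l -> (numq (d%:R * q))%:~R = d%:R * q.
Proof.
elim: l => [|q l [d [d0 Hd]]]; first by exists 1%N.
have dq0 : (0 < absz (denq q))%N by rewrite absz_gt0 denq_neq0.
have dqE : (absz (denq q))%:R = (denq q)%:~R :> rat.
  by rewrite natr_absz ger0_norm // ltW // denq_gt0.
exists (d * absz (denq q))%N; split; first by rewrite muln_gt0 d0.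
move=> q'; rewrite in_cons => /orP[/eqP->|Hq'].
  by rewrite natrM dqE -mulrA [_%:~R * q]mulrC -numqE -[d%:R]/((d%:Z)%:~R : rat) -intrM numq_int.
rewrite natrM mulrAC -(Hd q' Hq') dqE -intrM numq_int.
by [].
Qed.

Lemma fin_bound (T : finType) (P : T -> nat -> Prop) :
  (forall t, exists m, P t m) -> exists B, forall t, exists m, (m <= B)%N /\ P t m.
Proof.
move=> HP.
suff [B HB] : exists B, forall t, t \in enum T -> exists m, (m <= B)%N /\ P t m.
  by exists B => t; apply: HB; rewrite mem_enum.
elim: (enum T) => [|a s [B HB]]; first by exists 0%N.
have [m Hm] := HP a.
exists (maxn m B) => t; rewrite in_cons => /orP[/eqP->|/HB [m' [Hm' Pm']]].
  by exists m; rewrite leq_maxl.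
by exists m'; rewrite (leq_trans Hm') // leq_maxr.
Qed.

Definition cz (a : 'I_3) : int :=
  if val a == 0%N then 0 else if val a == 1%N then 1 else -1.
Definition dot {V : zmodType} {k : nat} (c : {ffun 'I_k -> 'I_3}) (g : 'I_k -> V) : V :=
  \sum_l g l *~ cz (c l).

Section Core.
Variable k : nat.
Local Notation CT := {ffun 'I_k -> 'I_3}.
Definition aZ (Z0 : {set CT}) (i : 'I_#|{: CT}|) (l : 'I_k) : int :=
  if enum_val i \in Z0 then cz (enum_val i l) else 0.
Definition Amat (Z0 : {set CT}) : 'M[rat]_(#|{: CT}|, k) :=
  \matrix_(i, l) (aZ Z0 i l)%:~R.
Definition rowv (c : CT) : 'rV[rat]_k := \row_l (cz (c l))%:~R.

Lemma P1 Z0 c : (rowv c <= Amat Z0)%MS ->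
  exists m : nat, (0 < m)%N /\ exists u : 'I_#|{: CT}| -> int,
    forall l, m%:Z * cz (c l) = \sum_i u i * aZ Z0 i l.
Proof.
move=> /submxP [u' Eu].
have [d [d0 Hd]] := clear_den [seq u' 0 i | i <- enum 'I_#|{: CT}|].
exists d; split => //; exists (fun i => numq (d%:R * u' 0 i)) => l.
apply: (@intr_inj rat).
rewrite intrM rmorph_sum /=.
have -> : (cz (c l))%:~R = rowv c 0 l by rewrite mxE.
rewrite Eu mxE mulr_sumr; apply: eq_bigr => i _.
rewrite intrM Hd; last by apply/mapP; exists i; rewrite ?mem_enum.
by rewrite mxE mulrA.
Qed.

Lemma theta_contra (G : zmodType) N (x : G) m :
  theta_gt G N -> x != 0 -> (0 < m)%N -> (m < N)%N -> x *+ m != 0.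
Proof.
move=> /(_ x) H /H [Hi|[n [[n0 [_ Hn]] Nn]]] m0 mN; first exact: Hi.
by apply: Hn; rewrite m0 (ltn_trans mN Nn).
Qed.

End Core.

Lemma core k : exists N, (0 < N)%N /\ forall G : zmodType, theta_gt G N ->
  forall g : 'I_k -> G, exists w : 'I_k -> int,
    forall c : {ffun 'I_k -> 'I_3}, (dot c g == 0) = (dot c w == 0).
Proof.
pose CT := {ffun 'I_k -> 'I_3}.
pose P := (fun (zc : ({set CT} * CT)%type) m => (rowv zc.2 <= Amat zc.1)%MS -> (0 < m)%N /\
     exists u : 'I_#|{: CT}| -> int, forall l, m%:Z * cz (zc.2 l) = \sum_i u i * aZ zc.1 i l).
have HP : forall zc, exists m, P zc m.
  move=> [Z0 c]; case: (boolP (rowv c <= Amat Z0)%MS) => H.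
    by have [m Hm] := P1 H; exists m.
  by exists 0%N => /= H'; rewrite H' in H.
have [B HB] := fin_bound HP.
exists B.+1; split=> // G thG g.
pose Z0 := [set c : CT | dot c g == 0].
pose l := [seq rowv c | c <- enum CT & ~~ (rowv c <= Amat Z0)%MS].
have Hl : forall c', c' \in l -> ~~ (c' <= Amat Z0)%MS.
  by move=> c' /mapP [c]; rewrite mem_filter => /andP [H _] ->.
have [x [Ax Hx]] := L3 Hl.
have [d [d0 Hd]] := clear_den [seq x i 0 | i <- enum 'I_k].
exists (fun i => numq (d%:R * x i 0)) => c.
have Ed : (dot c (fun i => numq (d%:R * x i 0)))%:~R = d%:R * (rowv c *m x) 0 0 :> rat.
  rewrite /dot rmorph_sum !mxE mulr_sumr; apply: eq_bigr => i _.
  rewrite raddfMz -mulrzr /= Hd; last by apply/mapP; exists i; rewrite ?mem_enum.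
  by rewrite !mxE -mulrA [x i 0 * _]mulrC.
have -> : (dot c (fun i => numq (d%:R * x i 0)) == 0) = ((rowv c *m x) 0 0 == 0).
  by rewrite -(intr_eq0 rat) Ed mulf_eq0 pnatr_eq0 (negbTE (lt0n_neq0 d0)).
case: (boolP (dot c g == 0)) => Hc.
  have Hrow : row (enum_rank c) (Amat Z0) = rowv c.
    by apply/rowP => l'; rewrite !mxE /aZ enum_rankK inE Hc.
  by rewrite -Hrow -row_mul Ax row0 mxE eqxx.
have nsub : ~~ (rowv c <= Amat Z0)%MS.
  apply/negP => sub.
  have [m [mB Pm]] := HB (Z0, c).
  have [m0 [u Hu]] := Pm sub.
  have : dot c g *+ m == 0.
    rewrite /dot -sumrMnl.
    have E1 : forall l', (g l' *~ cz (c l')) *+ m = g l' *~ (m%:Z * cz (c l')).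
      by move=> l'; rewrite pmulrn -mulrzA mulrC.
    rewrite (eq_bigr _ (fun l' _ => E1 l')).
    under eq_bigr => l' _ do rewrite Hu mulrz_sumr.
    rewrite exchange_big /=; apply/eqP; apply: big1 => i _.
    under eq_bigr => l' _ do rewrite mulrC mulrzA.
    rewrite -mulrz_suml.
    suff -> : \sum_(i0 < k) g i0 *~ aZ Z0 i i0 = 0 by rewrite mul0rz.
    rewrite /aZ; case: (boolP (enum_val i \in Z0)) => Hi.
      by move: Hi; rewrite inE /dot => /eqP.
    by apply: big1 => l' _; rewrite mulr0z.
  by rewrite (negbTE (theta_contra thG Hc m0 _)).
rewrite (negbTE (Hx _ _)) //.
by apply/mapP; exists c => //; rewrite mem_filter nsub mem_enum.
Qed.

Lemma fst_sum (A B : zmodType) (T : Type) (u : seq T) (F : T -> A * B) :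
  (\sum_(x <- u) F x).1 = \sum_(x <- u) (F x).1.
Proof. by elim: u => [|a u IH]; rewrite ?big_nil ?big_cons //= IH. Qed.

Lemma snd_sum (A B : zmodType) (T : Type) (u : seq T) (F : T -> A * B) :
  (\sum_(x <- u) F x).2 = \sum_(x <- u) (F x).2.
Proof. by elim: u => [|a u IH]; rewrite ?big_nil ?big_cons //= IH. Qed.

Lemma pair0 (A B : zmodType) (z : A * B) : z.1 = 0 -> z.2 = 0 -> z = 0.
Proof. by case: z => a b /= -> ->. Qed.

Lemma sum_sub (T : eqType) (V : zmodType) (s u : seq T) x0 (F : T -> V) :
  uniq s -> uniq u -> {subset u <= s} ->
  \sum_(x <- u) F x =
  \sum_(0 <= l < size s) (if nth x0 s l \in u then F (nth x0 s l) else 0).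
Proof.
move=> us uu sub.
have pe : perm_eq u [seq x <- s | x \in u].
  apply: uniq_perm => //; first exact: filter_uniq.
  by move=> x; rewrite mem_filter; case: (boolP (x \in u)) => // /sub ->.
by rewrite (perm_big _ pe) big_filter (big_nth x0) -big_mkcond.
Qed.

Definition one3 : 'I_3 := @Ordinal 3 1 isT.
Definition two3 : 'I_3 := @Ordinal 3 2 isT.
Definition mkc k (P Q : pred 'I_k) : {ffun 'I_k -> 'I_3} :=
  [ffun l => if P l then one3 else if Q l then two3 else ord0].

Lemma dot_mkc (V : zmodType) k (P Q : pred 'I_k) (g : 'I_k -> V) :
  (forall l, P l -> ~~ Q l) ->
  dot (mkc P Q) g = \sum_(l | P l) g l - \sum_(l | Q l) g l.
Proof.
move=> PQ; rewrite /dot (big_mkcond P) (big_mkcond Q) -sumrB.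
apply: eq_bigr => l _; rewrite ffunE.
case: (boolP (P l)) => Pl.
  by rewrite (negbTE (PQ l Pl)) subr0 /cz /= mulr1z.
case: (Q l); rewrite /cz /=; [by rewrite mulrN1z sub0r | by rewrite mulr0z subr0].
Qed.

Lemma Zp_int_eq0 p (z : int) : prime p -> (absz z < p)%N ->
  ((z%:~R : 'Z_p) == 0) = (z == 0).
Proof.
move=> pp; have p1 := prime_gt1 pp.
have key : forall n, (n < p)%N -> ((n%:R : 'Z_p) == 0) = (n == 0%N).
  move=> n np; rewrite Zp_nat; apply/eqP/eqP => [/(congr1 val)|->].
    by rewrite /= Zp_cast // modn_small.
  by apply: val_inj; rewrite /= mod0n.
case: z => n /= np.
  by rewrite key.
by rewrite NegzE mulrNz oppr_eq0 key.
Qed.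

Lemma size_cnt (X : eqType) (Y : Type) t (h : 'I_t -> X) (hb : bijective h)
  (key : Y -> X) (s : seq Y) :
  (\sum_(i < t) count (fun y => key y == h i) s)%N = size s.
Proof.
case: hb => hi hK Kh.
elim: s => [|y s IH] /=; first by rewrite big1.
rewrite big_split /= IH (bigD1 (hi (key y))) //= Kh eqxx big1 //.
move=> i ne; case: eqP => // E; move: ne; by rewrite E hK eqxx.
Qed.

Lemma transfer (H : finZmodType) t (h : 'I_t -> H) (lam : 'I_t -> nat) k
  (G V : zmodType) (s : seq (G * H)%type) (g : 'I_k -> G) (w' : 'I_k -> V) :
  size s = k -> (forall l, g l = (nth 0 s l).1) ->
  (forall c, (dot c g == 0) = (dot c w' == 0)) ->
  all_nzs_type_sequenceable V h lam ->
  uniq s -> (0 : G * H) \notin s -> (\sum_(x <- s) x != 0) ->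
  (forall i : 'I_t, count (fun x : G * H => x.2 == h i) s = lam i) ->
  sequenceable s.
Proof.
move=> Hsz Hg Hpat Hseq us n0s sum0 cnt.
pose f (x : G * H) : V * H := (odflt 0 (omap w' (insub (index x s) : option 'I_k)), x.2).
have fnth : forall l : 'I_k, f (nth 0 s l) = (w' l, (nth 0 s l).2).
  by move=> l; rewrite /f index_uniq ?Hsz // valK.
have inS : forall x, x \in s -> exists l : 'I_k, x = nth 0 s l.
  move=> x xs; have lt : (index x s < k)%N by rewrite -Hsz index_mem.
  by exists (Ordinal lt); rewrite /= nth_index.
have Hsum : forall u, uniq u -> {subset u <= s} ->
   \sum_(x <- u) x.1 = dot (mkc (fun l => nth 0 s l \in u) pred0) g /\
   \sum_(x <- u) (f x).1 = dot (mkc (fun l => nth 0 s l \in u) pred0) w'.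
  move=> u uu sub; rewrite !dot_mkc // /pred0 /= !big_pred0_eq !subr0.
  rewrite (sum_sub 0 (fun x => x.1) us uu sub) (sum_sub 0 (fun x => (f x).1) us uu sub).
  rewrite Hsz !big_mkord !(big_mkcond (fun l : 'I_k => nth 0 s l \in u)).
  by split; apply: eq_bigr => l _; case: ifP => // _; rewrite ?Hg ?fnth.
have finj : {in s &, injective f}.
  move=> x y /inS [lx ->] /inS [ly ->]; rewrite !fnth => -[E1 E2].
  case: (eqVneq lx ly) => [->//|ne].
  have PQ : forall l, pred1 lx l -> ~~ pred1 ly l by move=> l /eqP -> /=; rewrite ne.
  have : dot (mkc (pred1 lx) (pred1 ly)) w' == 0.
    by rewrite dot_mkc // !big_pred1_eq E1 subrr.
  rewrite -Hpat dot_mkc // !big_pred1_eq subr_eq0 !Hg => /eqP E.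
  by move: E E2; case: (nth 0 s lx) => a b; case: (nth 0 s ly) => a' b' /= -> ->.
have s'u : uniq (map f s) by rewrite map_inj_in_uniq.
have s'0 : (0 : V * H) \notin map f s.
  apply/mapP => -[x xs]; case/inS: xs => l ->; rewrite fnth => E.
  have E1 := congr1 fst E; have E2 := congr1 snd E; rewrite /= in E1 E2.
  have : dot (mkc (pred1 l) pred0) w' == 0.
    by rewrite dot_mkc // big_pred1_eq big_pred0 // subr0 -E1.
  rewrite -Hpat dot_mkc // big_pred1_eq big_pred0 // subr0 Hg => /eqP G1.
  move/negP: n0s; apply; rewrite -(pair0 G1 (esym E2)); apply: mem_nth; by rewrite Hsz.
have s'sum : \sum_(y <- map f s) y != 0.
  apply: contra sum0 => /eqP Es.
  rewrite big_map in Es.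
  have [H1 H2] := Hsum s us (fun x (xs : x \in s) => xs).
  have E1 := congr1 fst Es; have E2 := congr1 snd Es; rewrite fst_sum /= in E1.
  rewrite snd_sum /= in E2.
  apply/eqP/pair0; last by rewrite snd_sum.
  by rewrite fst_sum H1; apply/eqP; rewrite Hpat -H2 E1.
have s'cnt : forall i, count (fun y : V * H => y.2 == h i) (map f s) = lam i.
  by move=> i; rewrite count_map; exact: cnt i.
have [xs' [pxs' Hxs']] := Hseq _ s'u s'0 s'sum s'cnt.
have sq' : is_sequencing xs'.
  case: Hxs' => // /andP [/eqP E _]; move: s'sum; by rewrite -(perm_big _ pxs') E eqxx.
pose finv y := nth 0 s (find (fun x => f x == y) s).
have finvK : {in s, forall x, finv (f x) = x}.
  move=> x xs; have hs : has (fun z => f z == f x) s by apply/hasP; exists x.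
  apply: finj => //; first by rewrite mem_nth // -has_find.
  exact/eqP/(nth_find 0 hs).
pose xs := map finv xs'.
have Exs : map f xs = xs'.
  rewrite -map_comp -[RHS]map_id; apply/eq_in_map => y yin.
  have : y \in map f s by rewrite -(perm_mem pxs').
  by case/mapP => x xs0 ->; rewrite /= finvK.
have pxs : perm_eq xs s.
  apply: (perm_trans (perm_map finv pxs')); rewrite -map_comp.
  have -> : map (finv \o f) s = s.
    by rewrite -[RHS]map_id; apply/eq_in_map => x xs0; exact: finvK.
  exact: perm_refl.
exists xs; split => //; left.
clearbody xs.
have uxs : uniq xs by rewrite (perm_uniq pxs).
move: sq'; rewrite /is_sequencing; apply: contraTT => /(uniqPn 0) [i [j [ij jsz E]]].
rewrite /psums size_mkseq in jsz.
rewrite /psums !nth_mkseq // ?(ltn_trans ij jsz) // in E.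
apply/(uniqPn 0); exists i, j; rewrite /psums size_mkseq -Exs size_map; split => //.
rewrite !nth_mkseq // ?(ltn_trans ij jsz) //.
rewrite -!map_take !big_map.
set u := drop i (take j xs).
have Tj : take j xs = take i xs ++ u.
  by rewrite -{1}(cat_take_drop i (take j xs)) take_takel // ltnW.
rewrite Tj big_cat /= in E *.
have U0 : \sum_(x <- u) x = 0.
  by apply: (@addrI _ (\sum_(x <- take i xs) x)); rewrite addr0 -E.
have uu : uniq u by rewrite drop_uniq // take_uniq.
have sub : {subset u <= s}.
  by move=> x /mem_drop /mem_take; rewrite (perm_mem pxs).
have [H1 H2] := Hsum u uu sub.
rewrite big_cat /=.
suff -> : \sum_(x <- u) f x = 0 by rewrite addr0.
apply: pair0.
  by rewrite fst_sum H2; apply/eqP; rewrite -Hpat -H1 -fst_sum U0.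
by move: (congr1 snd U0); rewrite !snd_sum.
Qed.

Unset Implicit Arguments. Set Strict Implicit.

Theorem theorem4p6 (H : finZmodType) (t : nat) (h : 'I_t -> H)
    (h_bij : bijective h) (h_0 : forall i : 'I_t, nat_of_ord i = 0%N -> h i = 0)
    (lam : 'I_t -> nat) :
  (forall M : nat, exists p : nat,
      (M < p)%N /\ prime p /\ all_nzs_type_sequenceable 'Z_p h lam) ->
  exists N : nat, (0 < N)%N /\
    forall G : zmodType, theta_gt G N -> all_nzs_type_sequenceable G h lam.
Proof.
move=> Hp.
have [N [N0 HN]] := core (\sum_i lam i)%N.
exists N; split => // G thG s us n0 sm cnt.
have Hsz : size s = (\sum_i lam i)%N.
  rewrite -(size_cnt h_bij (fun x : G * H => x.2) s).
  by apply: eq_bigr => i _; rewrite cnt.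
pose g (l : 'I_(\sum_i lam i)%N) := (nth 0 s l).1.
have [w Hw] := HN G thG g.
have [p [Mp [pp Hseq]]] :=
  Hp (\sum_(c : {ffun 'I_(\sum_i lam i)%N -> 'I_3}) absz (dot c w))%N.
pose w' (l : 'I_(\sum_i lam i)%N) : 'Z_p := (w l)%:~R.
apply: (transfer (w' := w') Hsz (fun l => erefl) _ Hseq us n0 sm cnt).
move=> c; rewrite Hw.
have -> : dot c w' = (dot c w)%:~R.
  by rewrite /dot rmorph_sum; apply: eq_bigr => l _; rewrite raddfMz.
rewrite Zp_int_eq0 //; apply: leq_ltn_trans Mp.
by rewrite (bigD1 c) //= leq_addr.
Qed.
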